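(* Let $\sigma=(V,\mathrm{atime},\mathrm{pos})$ be an instance of $k$-MPMD on an $H$-metric space $(\chi,d_H)$ with parameter $\gamma$. For every $k$-element set $F=\{v_1,\ldots,v_k\}\subseteq V$, letting $v\in F$ be a request with $\mathrm{atime}(v)=\max_{u\in F}\mathrm{atime}(u)$, $$\frac{1}{\gamma k^2}\sum_{i=1}^{k-1}\sum_{j=i+1}^{k}\mathrm{opt\text{-}cost}(v_i,v_j)\;\le\;\mathrm{opt\text{-}cost}(F)\;\le\;\sum_{i=1}^{k}\mathrm{opt\text{-}cost}(v,v_i),$$ where $\mathrm{opt\text{-}cost}(v,v):=0$.
   Context: $k\ge2$. An $H$-metric with parameter $\gamma$ (integer, $1\le\gamma\le k-1$) is a map $d_H:\chi^k\to[0,\infty)$ that is invariant under permutation of its arguments, is zero iff all arguments are equal, satisfies $d_H(p_1,\ldots,p_k)\le d_H(p_1,\ldots,p_i,a,\ldots,a)+d_H(a,\ldots,a,p_{i+1},\ldots,p_k)$ for all $p_j,a\in\chi$ and $i\in\{1,\dots,k\}$ (with $k-i$, resp. $i$, copies of $a$), and satisfies: $d_H(p)\le d_H(p')$ whenever the set of distinct entries of $p$ is a proper subset of that of $p'$, and $d_H(p)\le\gamma d_H(p')$ whenever these sets are equal. An instance of $k$-MPMD is $\sigma=(V,\mathrm{atime},\mathrm{pos})$ with $V=\{u_1,\ldots,u_m\}$ a set of requests ($m$ a multiple of $k$), arrival times $\mathrm{atime}:V\to\mathbb R_{\ge0}$ with $\mathrm{atime}(u_1)\le\cdots\le\mathrm{atime}(u_m)$,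 and positions $\mathrm{pos}:V\to\chi$. For a $k$-element $F=\{v_1,\ldots,v_k\}\subseteq V$, $\mathrm{opt\text{-}cost}(F):=d_H(\mathrm{pos}(v_1),\ldots,\mathrm{pos}(v_k))+\sum_{i=1}^k\big(\max_j\mathrm{atime}(v_j)-\mathrm{atime}(v_i)\big)$. The metric $d$ on $\chi$ is $d(p,q):=d_H(p,q,\ldots,q)+d_H(q,p,\ldots,p)$ (first argument once, second $k-1$ times). For distinct requests $u,w$, $\mathrm{opt\text{-}cost}(u,w):=d(\mathrm{pos}(u),\mathrm{pos}(w))+|\mathrm{atime}(u)-\mathrm{atime}(w)|$. *)

(* Defs.v *)
From HB Require Import structures.
From mathcomp Require Import all_boot all_order all_algebra all_fingroup.
Set Implicit Arguments. Unset Strict Implicit. Unset Printing Implicit Defensive.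
Import Order.TTheory GRing.Theory Num.Theory.
Local Open Scope ring_scope.

Definition entries_sub (chi : Type) (k : nat) (p p' : {ffun 'I_k -> chi}) : Prop :=
  forall i, exists j, p i = p' j.

Definition entries_proper (chi : Type) (k : nat) (p p' : {ffun 'I_k -> chi}) : Prop :=
  entries_sub p p' /\ ~ entries_sub p' p.

Definition entries_eq (chi : Type) (k : nat) (p p' : {ffun 'I_k -> chi}) : Prop :=
  entries_sub p p' /\ entries_sub p' p.

Definition pref_then (chi : Type) (k : nat) (p : {ffun 'I_k -> chi}) (i : nat) (a : chi)
  : {ffun 'I_k -> chi} := [ffun j : 'I_k => if (j < i)%N then p j else a].
Definition const_then (chi : Type) (k : nat) (p : {ffun 'I_k -> chi}) (i : nat) (a : chi)
  : {ffun 'I_k -> chi} := [ffun j : 'I_k => if (j < i)%N then a else p j].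

Definition is_Hmetric (R : realFieldType) (chi : Type) (k gamma : nat)
  (dH : {ffun 'I_k -> chi} -> R) : Prop :=
  (forall p, 0 <= dH p) /\
  (forall (s : 'S_k) (p : {ffun 'I_k -> chi}), dH [ffun j => p (s j)] = dH p) /\
  (forall p, dH p = 0 <-> forall i j, p i = p j) /\
      (forall p a (i : nat), (1 <= i <= k)%N ->
          dH p <= dH (pref_then p i a) + dH (const_then p i a)) /\
  (forall p p', entries_proper p p' -> dH p <= dH p') /\
  (forall p p', entries_eq p p' -> dH p <= gamma%:R * dH p').

Definition one_then (chi : Type) (k : nat) (p q : chi) : {ffun 'I_k -> chi} :=
  [ffun j : 'I_k => if (j == 0 :> nat) then p else q].

Definition dist (R : realFieldType) (chi : Type) (k : nat)
  (dH : {ffun 'I_k -> chi} -> R) (p q : chi) : R :=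
  dH (one_then k p q) + dH (one_then k q p).

Definition is_instance (R : realFieldType) (chi : Type) (k m : nat)
  (atime : 'I_m -> R) (pos : 'I_m -> chi) : Prop :=
  (k %| m)%N /\ (forall u, 0 <= atime u) /\
  (forall u w : 'I_m, (u <= w)%N -> atime u <= atime w).

(* opt-cost(F) for F = {v_1,...,v_k} given by an injective v : 'I_k -> 'I_m *)
Definition opt_cost_set (R : realFieldType) (chi : Type) (k m : nat)
  (dH : {ffun 'I_k -> chi} -> R) (atime : 'I_m -> R) (pos : 'I_m -> chi)
  (v : 'I_k -> 'I_m) : R :=
  dH [ffun i => pos (v i)] +
  \sum_(i < k) (\big[Num.max/atime (v i)]_(j < k) atime (v j) - atime (v i)).

Definition opt_cost_pair (R : realFieldType) (chi : Type) (k m : nat)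
  (dH : {ffun 'I_k -> chi} -> R) (atime : 'I_m -> R) (pos : 'I_m -> chi)
  (u w : 'I_m) : R :=
  if u == w then 0 else dist dH (pos u) (pos w) + `|atime u - atime w|.

(* Main.v *)
Require Import Defs.
From HB Require Import structures.
From mathcomp Require Import all_boot all_order all_algebra all_fingroup.
From mathcomp Require Import ring lra.
From Stdlib Require Import Classical.
Import Order.TTheory GRing.Theory Num.Theory.
Local Open Scope ring_scope.

Section Aux.
Variables (R : realFieldType) (chi : Type) (k gamma : nat)
  (dH : {ffun 'I_k -> chi} -> R).
Hypothesis hH : @is_Hmetric R chi k gamma dH.

Definition qn (q : {ffun 'I_k -> chi}) a (n : nat) : {ffun 'I_k -> chi} :=
  [ffun j : 'I_k => if (j < n)%N then a else q j].
Definition et (q : {ffun 'I_k -> chi}) a (t : 'I_k) : {ffun 'I_k -> chi} :=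
  [ffun j : 'I_k => if j == t then q t else a].

Lemma dH_ge0 p : 0 <= dH p.
Proof. by case: hH. Qed.

Lemma dH_const (p : {ffun 'I_k -> chi}) : (forall i j, p i = p j) -> dH p = 0.
Proof. by case: hH => _ [_ [h _]] H; apply/h. Qed.

Lemma tri_step q a (n : nat) (hn : (n < k)%N) :
  dH (qn q a n) <= dH (et q a (Ordinal hn)) + dH (qn q a n.+1).
Proof.
case: hH => _ [_ [_ [htri _]]].
have := htri (qn q a n) a n.+1; rewrite hn => /(_ isT).
have -> : pref_then (qn q a n) n.+1 a = et q a (Ordinal hn).
  apply/ffunP => j; rewrite !ffunE ltnS leq_eqVlt -val_eqE /=.
  by case: (ltngtP j n) => // h; congr (q _); apply: val_inj.
have -> // : const_then (qn q a n) n.+1 a = qn q a n.+1.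
apply/ffunP => j; rewrite !ffunE ltnS.
by case: (ltngtP j n) => // ->; rewrite ltnn.
Qed.

Lemma tri_all q a : dH q <= \sum_(t < k) dH (et q a t).
Proof.
suff H : forall m n, (n + m = k)%N ->
    dH (qn q a n) <= \sum_(t < k | (n <= t)%N) dH (et q a t).
  have := H k 0%N (add0n k).
  have -> : qn q a 0 = q by apply/ffunP => j; rewrite ffunE.
  by under eq_bigl do rewrite leq0n.
elim=> [|m IH] n hnm.
  rewrite addn0 in hnm; subst n.
  rewrite dH_const; first by apply: sumr_ge0 => t _; exact: dH_ge0.
  by move=> i j; rewrite !ffunE !ltn_ord.
have hn : (n < k)%N by rewrite -hnm addnS ltnS leq_addr.
apply: (le_trans (@tri_step q a n hn)).
rewrite (bigD1 (Ordinal hn)) //= lerD2l.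
have := IH n.+1; rewrite addSnnS => /(_ hnm) H1.
apply: (le_trans H1).
suff -> : \sum_(i < k | (n <= i)%N && (i != Ordinal hn)) dH (et q a i) =
  \sum_(t < k | (n < t)%N) dH (et q a t) by [].
by apply: eq_bigl => t; rewrite ltn_neqAle -val_eqE /= eq_sym andbC.
Qed.


Lemma et_one q a t : dH (et q a t) = dH (one_then k (q t) a).
Proof.
case: hH => _ [hperm _].
have k0 : (0 < k)%N by apply: leq_ltn_trans (ltn_ord t).
rewrite -(hperm (tperm (Ordinal k0) t)); congr dH; apply/ffunP => j.
rewrite !ffunE -[X in _ == X](tpermL (Ordinal k0) t) (inj_eq perm_inj).
by rewrite -val_eqE.
Qed.

Lemma pair_le (p : {ffun 'I_k -> chi}) i j : (1 <= gamma)%N ->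
  dH (one_then k (p i) (p j)) <= gamma%:R * dH p.
Proof.
move=> g1; case: hH => h0 [_ [_ [_ [hprop heq]]]].
have hs : entries_sub (one_then k (p i) (p j)) p.
  by move=> t; rewrite ffunE; case: ifP => _; [exists i | exists j].
case: (classic (entries_sub p (one_then k (p i) (p j)))) => h.
  by apply: heq; split.
apply: (le_trans (hprop _ _ (conj hs h))).
by rewrite -{1}[dH p]mul1r ler_wpM2r ?ler1n.
Qed.
End Aux.
Arguments tri_all {R chi k gamma dH}.
Arguments dH_const {R chi k gamma dH}.
Arguments et_one {R chi k gamma dH}.
Arguments dH_ge0 {R chi k gamma dH}.
Arguments pair_le {R chi k gamma dH}.
Lemma bigmax_ge (R : realFieldType) (I : eqType) (s : seq I) (F : I -> R) x0 j :
  j \in s -> F j <= \big[Num.max/x0]_(i <- s) F i.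
Proof.
elim: s => // b s IH; rewrite in_cons big_cons => /orP [/eqP ->|h].
  by rewrite le_max lexx.
by rewrite le_max IH ?orbT.
Qed.

Lemma bigmax_le (R : realFieldType) (I : Type) (s : seq I) (F : I -> R) x0 T :
  x0 <= T -> (forall i, F i <= T) -> \big[Num.max/x0]_(i <- s) F i <= T.
Proof.
move=> h0 hF; elim: s => [|b s IH]; first by rewrite big_nil.
by rewrite big_cons ge_max hF IH.
Qed.

Theorem lemma1 (R : realFieldType) (chi : Type) (k gamma m : nat)
  (dH : {ffun 'I_k -> chi} -> R) (atime : 'I_m -> R) (pos : 'I_m -> chi)
  (v : 'I_k -> 'I_m) (l : 'I_k) :
  (2 <= k)%N -> (1 <= gamma <= k.-1)%N ->
  @is_Hmetric R chi k gamma dH ->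
  @is_instance R chi k m atime pos ->
  injective v ->
  (forall j : 'I_k, atime (v j) <= atime (v l)) ->
  ((gamma * k ^ 2)%:R)^-1 *
      (\sum_(i < k) \sum_(j < k | (i < j)%N) opt_cost_pair dH atime pos (v i) (v j))
    <= opt_cost_set dH atime pos v
  /\ opt_cost_set dH atime pos v <= \sum_(i < k) opt_cost_pair dH atime pos (v l) (v i).
Proof.
move=> hk /andP [g1 _] hH hI hinj hl.
have hmax : forall i, \big[Num.max/atime (v i)]_(j < k) atime (v j) = atime (v l).
  move=> i; apply/eqP; rewrite eq_le; apply/andP; split.
    by apply: bigmax_le.
  by apply: (@bigmax_ge _ _ _ (fun j => atime (v j))); rewrite mem_index_enum.
set T := atime (v l).
set p : {ffun 'I_k -> chi} := [ffun i => pos (v i)].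
set S := \sum_(i < k) (T - atime (v i)).
have hoc : opt_cost_set dH atime pos v = dH p + S.
  by rewrite /opt_cost_set; congr (_ + _); apply: eq_bigr => i _; rewrite hmax.
have hpair : forall i j, opt_cost_pair dH atime pos (v i) (v j) =
    if i == j then 0 else dist dH (pos (v i)) (pos (v j)) + `|atime (v i) - atime (v j)|.
  by move=> i j; rewrite /opt_cost_pair (inj_eq hinj).
have S0 : forall i, 0 <= T - atime (v i) by move=> i; rewrite subr_ge0.
have hS0 : 0 <= S by apply: sumr_ge0 => i _.
have D0 : 0 <= dH p by apply: dH_ge0 hH p.
rewrite hoc; split.
  set G : R := gamma%:R.
  set D := dH p.
  set c := G * D + G * D + S.
  have G1 : 1 <= G by rewrite ler1n.
  have GD : 0 <= G * D by apply: mulr_ge0 => //; lra.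
  have c0 : 0 <= c by rewrite /c; lra.
  have hZ : \sum_(i < k) \sum_(j < k | (i < j)%N) opt_cost_pair dH atime pos (v i) (v j)
      <= \sum_(i < k) \sum_(j < k | (i < j)%N) c.
    apply: ler_sum => i _; apply: ler_sum => j hij.
    rewrite hpair (_ : (i == j) = false); last first.
      by apply/eqP => e; move: hij; rewrite e ltnn.
    rewrite /c; apply: lerD.
      rewrite /dist; apply: lerD.
        by have := pair_le hH p i j g1; rewrite !ffunE.
      by have := pair_le hH p j i g1; rewrite !ffunE.
    have hij' : j != i by apply/eqP => e; move: hij; rewrite e ltnn.
    apply: (@le_trans _ _ ((T - atime (v i)) + (T - atime (v j)))).
      have := hl i; have := hl j; rewrite -/T => h1 h2.
      rewrite ler_norml; apply/andP; split; lra.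
    rewrite /S (bigD1 i) //= (bigD1 j) //= addrA ler_wpDr //.
    by apply: sumr_ge0 => t _.
  set Z := \sum_(i < k) \sum_(j < k | (i < j)%N) c.
  have e1 : Z = \sum_(i < k) \sum_(j < k) (if (i < j)%N then c else 0).
    by apply: eq_bigr => i _; rewrite big_mkcond.
  have e2 : Z = \sum_(i < k) \sum_(j < k) (if (j < i)%N then c else 0).
    by rewrite e1 exchange_big.
  have hZ2 : Z + Z <= \sum_(i < k) \sum_(j < k) c.
    rewrite {1}e1 e2 -big_split; apply: ler_sum => i _.
    rewrite -big_split; apply: ler_sum => j _.
    by case: (ltngtP i j) => _ /=; rewrite ?addr0 ?add0r.
  rewrite sumr_const card_ord sumr_const card_ord in hZ2.
  set N : R := (gamma * k ^ 2)%:R.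
  set K : R := k%:R.
  have K0 : 0 < K by rewrite ltr0n; apply: leq_trans hk.
  have NE : N = G * (K * K) by rewrite /N natrM natrX expr2.
  have hN : 0 < N by rewrite NE; apply: mulr_gt0; [lra | apply: mulr_gt0].
  rewrite -(ler_pM2l hN) mulrA mulfV ?gt_eqF // mul1r.
  rewrite -mulrnA -mulr_natr -/K natrM -/K in hZ2.
  apply: (le_trans hZ).
  rewrite -/Z NE.
  have KK : 0 <= K * K by apply: mulr_ge0; lra.
  have KS : 0 <= K * K * S by apply: mulr_ge0.
  have KSG : 0 <= K * K * S * (G - 1) by apply: mulr_ge0 => //; lra.
  rewrite /c in hZ2; nra.
rewrite (eq_bigr (fun i => (if l == i then 0 else dist dH (pos (v l)) (pos (v i)))
   + (if l == i then 0 else `|T - atime (v i)|))); last first.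
  by move=> i _; rewrite hpair; case: eqP => //; rewrite addr0.
rewrite big_split /=; apply: lerD.
  apply: le_trans (tri_all hH p (pos (v l))) _; apply: ler_sum => i _.
  case: eqP => [<-|ne].
    rewrite (dH_const hH) // => x y; rewrite !ffunE.
    by do 2 case: (_ == _).
  rewrite (et_one hH) /dist ffunE addrC; apply: ler_wpDr; first exact: dH_ge0 hH _.
  exact: lexx.
apply: ler_sum => i _; case: eqP => [<-|ne]; first by rewrite subrr.
exact: ler_norm.
Qed.
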